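(* Let $\mu$ be a fuzzy subset of a fuzzy $\Gamma$-hypersemigroup $(M,\circ)$ and let $\nu$ be a fuzzy $\Gamma$-hyper bi-ideal of $(M,\circ)$. Then for every $\gamma\in\Gamma$, both $\mu\circ\gamma\circ\nu$ and $\nu\circ\gamma\circ\mu$ are fuzzy $\Gamma$-hyper bi-ideals of $(M,\circ)$.
   Context: $M,\Gamma$ are nonempty sets; a fuzzy subset of $M$ is a map $M\to[0,1]$. A fuzzy $\Gamma$-hyperoperation assigns to each $(a,\gamma,b)\in M\times\Gamma\times M$ a fuzzy subset $a\circ\gamma\circ b$. For $a\in M$ and fuzzy $\mu$: $(a\circ\gamma\circ\mu)(r)=\bigvee_{t\in M}((a\circ\gamma\circ t)(r)\wedge\mu(t))$ if $\mu\ne0$, else $0$; $(\mu\circ\gamma\circ a)(r)=\bigvee_{t\in M}(\mu(t)\wedge(t\circ\gamma\circ a)(r))$ if $\mu\ne0$, else $0$. For fuzzy $\mu,\nu$: $(\mu\circ\gamma\circ\nu)(t)=\bigvee_{p,q\in M}(\mu(p)\wedge(p\circ\gamma\circ q)(t)\wedge\nu(q))$. $(M,\circ)$ is a fuzzy $\Gamma$-hypersemigroup if $(a\circ\alpha\circ b)\circ\beta\circ c=a\circ\alpha\circ(b\circ\beta\circ c)$ for all $a,b,c\in M$, $\alpha,\beta\in\Gamma$. For fuzzy sets, $\mu\subseteq\nu$ means $\mu(x)\le\nu(x)$ for all $x$. A fuzzy sub $\Gamma$-hypersemigroup is a fuzzy subset $\mu$ with $\mu\circ\gamma\circ\mu\subseteq\mu$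 for all $\gamma\in\Gamma$. A fuzzy $\Gamma$-hyper bi-ideal is a fuzzy sub $\Gamma$-hypersemigroup $\mu$ with $(\mu\circ\alpha\circ y)\circ\beta\circ\mu\subseteq\mu$ for all $y\in M$, $\alpha,\beta\in\Gamma$. *)

(* Defs.v *)
From mathcomp Require Import all_boot all_order all_algebra.
From mathcomp Require Import all_classical all_reals.
Set Implicit Arguments. Unset Strict Implicit. Unset Printing Implicit Defensive.
Import Order.TTheory GRing.Theory Num.Theory.
Local Open Scope ring_scope.
Local Open Scope classical_set_scope.

Section FuzzyGamma.
Variables (R : realType) (M G : Type).

Definition is_fuzzy (mu : M -> R) : Prop := forall x, 0 <= mu x <= 1.

(* a fuzzy Gamma-hyperoperation: op a g b is the fuzzy subset a o g o b *)
Variable op : M -> G -> M -> M -> R.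

Definition nonzero (mu : M -> R) : Prop := mu <> (fun _ => 0).

Definition fz_el_fz (a : M) (g : G) (mu : M -> R) : M -> R := fun r =>
  if pselect (nonzero mu)
  then sup (range (fun t => Num.min (op a g t r) (mu t)))
  else 0.

Definition fz_fz_el (mu : M -> R) (g : G) (a : M) : M -> R := fun r =>
  if pselect (nonzero mu)
  then sup (range (fun t => Num.min (mu t) (op t g a r)))
  else 0.

Definition fz_fz_fz (mu : M -> R) (g : G) (nu : M -> R) : M -> R := fun t =>
  sup (range (fun pq : M * M =>
    Num.min (mu pq.1) (Num.min (op pq.1 g pq.2 t) (nu pq.2)))).

Definition fz_subset (mu nu : M -> R) : Prop := forall x, mu x <= nu x.

Definition fuzzy_hypersemigroup : Prop :=
  forall (a b c : M) (al be : G),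
    fz_fz_el (op a al b) be c = fz_el_fz a al (op b be c).

Definition fuzzy_sub_hypersemigroup (mu : M -> R) : Prop :=
  is_fuzzy mu /\ forall g : G, fz_subset (fz_fz_fz mu g mu) mu.

Definition fuzzy_hyper_bi_ideal (mu : M -> R) : Prop :=
  fuzzy_sub_hypersemigroup mu /\
  forall (y : M) (al be : G), fz_subset (fz_fz_fz (fz_fz_el mu al y) be mu) mu.

End FuzzyGamma.

(* Main.v *)
Require Import Defs.
From mathcomp Require Import all_boot all_order all_algebra.
From mathcomp Require Import all_classical all_reals.
Import Order.TTheory GRing.Theory Num.Theory.
Local Open Scope ring_scope.
Local Open Scope classical_set_scope.
Set Implicit Arguments. Unset Strict Implicit.

Lemma lt_sup_rng (R : realType) (T : Type) (f : T -> R) (c : R) e t :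
  (forall t, f t <= c) -> e < f t -> e < sup (range f).
Proof.
move=> hb ht; apply: (lt_le_trans ht); apply: ub_le_sup; last by exists t.
by exists c => _ [u _ <-].
Qed.

Lemma sup_rng_lt (R : realType) (T : Type) (f : T -> R) e :
  inhabited T -> e < sup (range f) -> exists t, e < f t.
Proof.
move=> [t0] /sup_gt; case; first by exists (f t0), t0.
by move=> _ [t _ <-] h; exists t.
Qed.

Lemma sup_rng_01 (R : realType) (T : Type) (f : T -> R) :
  inhabited T -> (forall t, 0 <= f t <= 1) -> 0 <= sup (range f) <= 1.
Proof.
move=> [t0] h; apply/andP; split.
  apply: (le_trans (proj1 (andP (h t0)))); apply: ub_le_sup; last by exists t0.
  by exists 1 => _ [u _ <-]; case/andP: (h u).
by apply: ge_sup; [exists (f t0), t0|move=> _ [u _ <-]; case/andP: (h u)].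
Qed.

Lemma le_by_e (R : realType) (x y : R) :
  0 <= y -> (forall e, 0 <= e -> e < x -> e < y) -> x <= y.
Proof. by move=> y0 h; rewrite leNgt; apply/negP => /(h _ y0); rewrite ltxx. Qed.

Section Main.
Variables (R : realType) (M G : Type).
Variable op : M -> G -> M -> M -> R.
Hypothesis hM : inhabited M.
Hypothesis hop : forall (a : M) (g : G) (b : M), is_fuzzy (op a g b).
Hypothesis hsg : fuzzy_hypersemigroup op.

Lemma op_le1 a g b r : op a g b r <= 1.
Proof. by case/andP: (hop a g b r). Qed.
Lemma op_ge0 a g b r : 0 <= op a g b r.
Proof. by case/andP: (hop a g b r). Qed.

Lemma nz_of (mu : M -> R) t e : 0 <= e -> e < mu t -> nonzero mu.
Proof. by move=> e0 h E; move: h; rewrite E => /(le_lt_trans e0); rewrite ltxx. Qed.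

Lemma fe_out mu g a r e : 0 <= e -> e < fz_fz_el op mu g a r ->
  exists t, e < mu t /\ e < op t g a r.
Proof.
move=> e0; rewrite /fz_fz_el; case: pselect => Hnz /=; last by rewrite ltNge e0.
by case/(@sup_rng_lt _ _ _ _ hM) => t; rewrite lt_min => /andP[? ?]; exists t.
Qed.

Lemma fe_in mu g a r e t : 0 <= e -> e < mu t -> e < op t g a r ->
  e < fz_fz_el op mu g a r.
Proof.
move=> e0 h1 h2; rewrite /fz_fz_el; case: pselect => /= [_|/(_ (nz_of e0 h1))//].
apply: (@lt_sup_rng _ _ _ 1 _ t); last by rewrite lt_min h1 h2.
by move=> u; rewrite ge_min op_le1 orbT.
Qed.

Lemma ef_out mu g a r e : 0 <= e -> e < fz_el_fz op a g mu r ->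
  exists t, e < op a g t r /\ e < mu t.
Proof.
move=> e0; rewrite /fz_el_fz; case: pselect => Hnz /=; last by rewrite ltNge e0.
by case/(@sup_rng_lt _ _ _ _ hM) => t; rewrite lt_min => /andP[? ?]; exists t.
Qed.

Lemma ef_in mu g a r e t : 0 <= e -> e < op a g t r -> e < mu t ->
  e < fz_el_fz op a g mu r.
Proof.
move=> e0 h1 h2; rewrite /fz_el_fz; case: pselect => /= [_|/(_ (nz_of e0 h2))//].
apply: (@lt_sup_rng _ _ _ 1 _ t); last by rewrite lt_min h1 h2.
by move=> u; rewrite ge_min op_le1.
Qed.

Lemma fff_out mu g nu t e : e < fz_fz_fz op mu g nu t ->
  exists p q, [/\ e < mu p, e < op p g q t & e < nu q].
Proof.
have hMM : inhabited (M * M) by case: hM => m; constructor; exact: (m, m).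
case/(@sup_rng_lt _ _ _ _ hMM) => -[p q] /=; rewrite !lt_min => /andP[? /andP[? ?]].
by exists p, q.
Qed.

Lemma fff_in mu g nu t e p q : e < mu p -> e < op p g q t -> e < nu q ->
  e < fz_fz_fz op mu g nu t.
Proof.
move=> h1 h2 h3; apply: (@lt_sup_rng _ _ _ 1 _ (p, q)); last by rewrite /= !lt_min h1 h2 h3.
by move=> [u v] /=; rewrite !ge_min op_le1 !orbT.
Qed.

Lemma fff_01 mu g nu : is_fuzzy mu -> is_fuzzy nu -> is_fuzzy (fz_fz_fz op mu g nu).
Proof.
have hMM : inhabited (M * M) by case: hM => m; constructor; exact: (m, m).
move=> hmu hnu t; apply: sup_rng_01 => // -[p q] /=.
case/andP: (hmu p) => ? ?; case/andP: (hnu q) => ? ?.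
by rewrite !le_min !ge_min op_le1 !op_ge0 !orbT /=; apply/andP; split=> //; apply/andP.
Qed.

Lemma assoc1 a al b be c p r e : 0 <= e -> e < op a al b p -> e < op p be c r ->
  exists s, e < op b be c s /\ e < op a al s r.
Proof.
move=> e0 h1 h2; have := fe_in e0 h1 h2; rewrite hsg.
by case/(ef_out e0) => s [? ?]; exists s.
Qed.

Lemma assoc2 a al b be c s r e : 0 <= e -> e < op b be c s -> e < op a al s r ->
  exists p, e < op a al b p /\ e < op p be c r.
Proof.
move=> e0 h1 h2; have := ef_in e0 h2 h1; rewrite -hsg.
by case/(fe_out e0) => p [? ?]; exists p.
Qed.


Variable nu : M -> R.
Hypothesis hnu : fuzzy_hyper_bi_ideal op nu.

Lemma BI q1 al y u be q2 s e : 0 <= e -> e < nu q1 -> e < op q1 al y u ->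
  e < op u be q2 s -> e < nu q2 -> e < nu s.
Proof.
move=> e0 h1 h2 h3 h4; apply: (lt_le_trans _ (hnu.2 y al be s)).
exact: (fff_in (fe_in e0 h1 h2) h3 h4).
Qed.

Lemma nu_fz : is_fuzzy nu. Proof. exact: hnu.1.1. Qed.

Lemma goal_left mu g : is_fuzzy mu -> fuzzy_hyper_bi_ideal op (fz_fz_fz op mu g nu).
Proof.
move=> hmu; have F := fff_01 g hmu nu_fz.
split; [split=> // be|move=> y al be] => t; apply: le_by_e;
  try by case/andP: (F t).
- move=> e e0 /fff_out [p [q [h1 h2 h3]]].
  case/fff_out: h1 => p1 [q1 [m1 o1 n1]].
  case/fff_out: h3 => p2 [q2 [m2 o2 n2]].
  have [s [s1 s2]] := assoc1 e0 o1 h2.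
  have [u [u1 u2]] := assoc2 e0 o2 s1.
  exact: (fff_in m1 s2 (BI e0 n1 u1 u2 n2)).
- move=> e e0 /fff_out [u [q [h1 h2 h3]]].
  case/(fe_out e0): h1 => w [hw1 hw2].
  case/fff_out: hw1 => p1 [q1 [m1 o1 n1]].
  case/fff_out: h3 => p2 [q2 [m2 o2 n2]].
  have [s1 [a1 a2]] := assoc1 e0 o1 hw2.
  have [s2 [b1 b2]] := assoc1 e0 a2 h2.
  have [v [c1 c2]] := assoc2 e0 o2 b1.
  have [s3 [d1 d2]] := assoc1 e0 a1 c1.
  exact: (fff_in m1 b2 (BI e0 n1 d2 c2 n2)).
Qed.

Lemma goal_right mu g : is_fuzzy mu -> fuzzy_hyper_bi_ideal op (fz_fz_fz op nu g mu).
Proof.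
move=> hmu; have F := fff_01 g nu_fz hmu.
split; [split=> // be|move=> y al be] => t; apply: le_by_e;
  try by case/andP: (F t).
- move=> e e0 /fff_out [p [q [h1 h2 h3]]].
  case/fff_out: h1 => p1 [q1 [n1 o1 m1]].
  case/fff_out: h3 => p2 [q2 [n2 o2 m2]].
  have [v [c1 c2]] := assoc2 e0 o2 h2.
  exact: (fff_in (BI e0 n1 o1 c1 n2) c2 m2).
- move=> e e0 /fff_out [u [q [h1 h2 h3]]].
  case/(fe_out e0): h1 => w [hw1 hw2].
  case/fff_out: hw1 => p1 [q1 [n1 o1 m1]].
  case/fff_out: h3 => p2 [q2 [n2 o2 m2]].
  have [v [c1 c2]] := assoc2 e0 o2 h2.
  have [s [a1 a2]] := assoc1 e0 o1 hw2.
  exact: (fff_in (BI e0 n1 a2 c1 n2) c2 m2).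
Qed.

End Main.
Unset Implicit Arguments.

Theorem theorem4p14 (R : realType) (M G : Type)
  (hM : inhabited M) (hG : inhabited G)
  (op : M -> G -> M -> M -> R)
  (hop : forall (a : M) (g : G) (b : M), is_fuzzy (op a g b))
  (hsg : fuzzy_hypersemigroup op)
  (mu nu : M -> R) (hmu : is_fuzzy mu)
  (hnu : fuzzy_hyper_bi_ideal op nu) :
  forall g : G,
    fuzzy_hyper_bi_ideal op (fz_fz_fz op mu g nu) /\
    fuzzy_hyper_bi_ideal op (fz_fz_fz op nu g mu).
Proof.
move=> g; split; [exact: (goal_left hM hop hsg hnu g hmu)|exact: (goal_right hM hop hsg hnu g hmu)].
Qed.
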